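(* For every $k\in\mathbb{N}$, $k\ge 2$, there exists a family of $k$-uniform hypergraph properties $f_v$ on $v$ vertices such that $s(f_v)=\Theta(v^{\lceil k/2\rceil})$ and $bs(f_v)=\Theta(v^k)$. In particular, for even $k$, $bs(f_v)=\Theta(s(f_v)^2)$.
   Context: A $k$-uniform hypergraph on $[v]$ is identified with a string in $\{0,1\}^{\binom vk}$. A $k$-uniform hypergraph property is a Boolean function on such strings invariant under all permutations of $[v]$. $s(f)$ is the maximum over inputs of the number of single-bit flips changing the value; $bs(f)$ is the maximum over inputs $x$ of the maximum number of pairwise disjoint sets of coordinates whose simultaneous flip changes $f(x)$. *)

(* Defs.v *)
From mathcomp Require Import all_boot all_fingroup.
Set Implicit Arguments. Unset Strict Implicit. Unset Printing Implicit Defensive.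

Definition edge (k v : nat) := {A : {set 'I_v} | #|A| == k}.

(* A k-uniform hypergraph on [v]: a set of k-edges (= a string in {0,1}^binom v k). *)
Definition hgraph (k v : nat) := {set edge k v}.

Lemma card_imset_perm (v : nat) (s : {perm 'I_v}) (A : {set 'I_v}) :
  #|s @: A| = #|A|.
Proof. by apply: card_imset; apply: perm_inj. Qed.

Definition edge_act k v (s : {perm 'I_v}) (e : edge k v) : edge k v :=
  insubd e (s @: val e).

Definition relabel k v (s : {perm 'I_v}) (x : hgraph k v) : hgraph k v :=
  [set edge_act s e | e in x].

Definition hyper_property k v (f : hgraph k v -> bool) : Prop :=
  forall (s : {perm 'I_v}) (x : hgraph k v), f (relabel s x) = f x.

Definition flip (T : finType) (x S : {set T}) : {set T} :=
  [set e | (e \in x) (+) (e \in S)].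

Definition sens_at (T : finType) (f : {set T} -> bool) (x : {set T}) : nat :=
  #|[set e | f (flip x [set e]) != f x]|.
Definition sens (T : finType) (f : {set T} -> bool) : nat :=
  \max_(x : {set T}) sens_at f x.

Definition sens_blocks (T : finType) (f : {set T} -> bool) (x : {set T})
    (P : {set {set T}}) : bool :=
  trivIset P && [forall S in P, f (flip x S) != f x].
Definition bsens_at (T : finType) (f : {set T} -> bool) (x : {set T}) : nat :=
  \max_(P : {set {set T}} | sens_blocks f x P) #|P|.
Definition bsens (T : finType) (f : {set T} -> bool) : nat :=
  \max_(x : {set T}) bsens_at f x.

Definition theta_pow (g : nat -> nat) (m : nat) : Prop :=
  exists c C N : nat, 0 < c /\
    forall v, N <= v -> v ^ m <= c * g v /\ g v <= C * v ^ m.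

Definition theta_sq (g h : nat -> nat) : Prop :=
  exists c C N : nat, 0 < c /\
    forall v, N <= v -> h v ^ 2 <= c * g v /\ g v <= C * h v ^ 2.

(* Main.v *)
Require Import Defs.
From mathcomp Require Import all_boot all_fingroup.
From mathcomp Require Import zify.
Set Implicit Arguments. Unset Strict Implicit. Unset Printing Implicit Defensive.

Lemma card_bigcup_le (I T : finType) (P : pred I) (F : I -> {set T}) :
  #|\bigcup_(i | P i) F i| <= \sum_(i | P i) #|F i|.
Proof.
elim/big_rec2: _ => [|i n U _ IH]; first by rewrite cards0.
by apply: (leq_trans (leq_card_setU _ _)); rewrite leq_add2l.
Qed.

Lemma ffact_le_exp n j : n ^_ j <= n ^ j.
Proof.
elim: j => [|j IH]; first by rewrite ffactn0.
by rewrite ffactnSr expnSr leq_mul // leq_subr.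
Qed.

Lemma bin_le_exp n j : 'C(n, j) <= n ^ j.
Proof.
apply: leq_trans (ffact_le_exp n j); rewrite -bin_ffact.
by rewrite leq_pmulr // fact_gt0.
Qed.

Lemma exists_subset_card (T : finType) (A : {set T}) h :
  h <= #|A| -> exists B : {set T}, (B \subset A) && (#|B| == h).
Proof.
move=> hA.
have : 0 < #|[set B : {set T} | B \subset A & #|B| == h]|.
  by rewrite cards_draws bin_gt0.
by case/card_gt0P => B; rewrite inE => HB; exists B.
Qed.

Lemma card_supsets (T : finType) (S : {set T}) j :
  #|[set B : {set T} | (S \subset B) && (#|B| == #|S| + j)]| <= 'C(#|T|, j).
Proof.
set D := [set B : {set T} | _].
rewrite -card_draws -(@card_in_imset _ _ (fun B => B :\: S) D).
  apply: subset_leq_card; apply/subsetP => C /imsetP[B BD ->].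
  move: BD; rewrite /D inE => /andP[sB /eqP cB].
  by rewrite inE cardsDS // cB addKn.
move=> B1 B2; rewrite /D !inE => /andP[s1 _] /andP[s2 _] E.
apply/setP => i; have := congr1 (fun X : {set T} => i \in X) E; rewrite /= !inE.
case iS: (i \in S) => /=; last by [].
by rewrite (subsetP s1) // (subsetP s2).
Qed.

Section Prop1.
Variables (k v : nat).

Definition hh := k./2.

Definition good (x : hgraph k v) (A : {set 'I_v}) : bool :=
  [&& #|A| == k.+1,
      [forall e : edge k v, (val e \subset A) ==> (e \in x)] &
      [forall e : edge k v, ((e \in x) && ~~ (val e \subset A)) ==> (#|val e :&: A| < hh)]].

Definition fP (x : hgraph k v) : bool := [exists A, good x A].

Lemma goodP (x : hgraph k v) (A : {set 'I_v}) : reflect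
  [/\ #|A| = k.+1, forall e : edge k v, val e \subset A -> e \in x &
      forall e : edge k v, e \in x -> ~~ (val e \subset A) -> #|val e :&: A| < hh]
  (good x A).
Proof.
apply: (iffP and3P) => [[/eqP c /forallP m /forallP w]|[c m w]]; split.
- by [].
- by move=> e /(implyP (m e)).
- by move=> e ex eA; apply: (implyP (w e)); rewrite ex eA.
- by rewrite c.
- by apply/forallP => e; apply/implyP; apply: m.
- by apply/forallP => e; apply/implyP => /andP[]; apply: w.
Qed.

Lemma val_act (s : {perm 'I_v}) (e : edge k v) : val (edge_act s e) = s @: val e.
Proof. by rewrite /edge_act val_insubd card_imset_perm (valP e). Qed.

Lemma actK (s : {perm 'I_v}) (e : edge k v) : edge_act s^-1%g (edge_act s e) = e.
Proof.
apply: val_inj; rewrite !val_act -imset_comp.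
rewrite (eq_imset _ (fun i => permK s i)) /=.
by apply/setP => i; apply/imsetP/idP => [[j jA ->]|iA]; last exists i.
Qed.

Lemma actK' (s : {perm 'I_v}) (e : edge k v) : edge_act s (edge_act s^-1%g e) = e.
Proof. by have := actK s^-1%g e; rewrite invgK. Qed.

Lemma mem_relabel (s : {perm 'I_v}) (x : hgraph k v) (e : edge k v) :
  (e \in relabel s x) = (edge_act s^-1%g e \in x).
Proof.
apply/imsetP/idP => [[e' e'x ->]|ex]; first by rewrite actK.
by exists (edge_act s^-1%g e); rewrite // actK'.
Qed.

Lemma sub_act (s : {perm 'I_v}) (B A : {set 'I_v}) :
  (s @: B \subset s @: A) = (B \subset A).
Proof.
apply/idP/idP; last exact: imsetS.
move=> /(imsetS s^-1%g); rewrite -!imset_comp.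
rewrite !(eq_imset _ (fun i => permK s i)) /=.
suff idE (C : {set 'I_v}) : [set (fun x => x) x | x in C] = C by rewrite !idE.
by apply/setP => i; apply/imsetP/idP => [[j jA ->]|iA]; last exists i.
Qed.

Lemma cardI_act (s : {perm 'I_v}) (B A : {set 'I_v}) :
  #|s @: B :&: s @: A| = #|B :&: A|.
Proof. by rewrite -imsetI; [apply: card_imset_perm | move=> i j _ _; apply: perm_inj]. Qed.

Lemma good_relabel (s : {perm 'I_v}) (x : hgraph k v) A : good x A -> good (relabel s x) (s @: A).
Proof.
move=> /goodP[c m w]; apply/goodP; split.
- by rewrite card_imset_perm.
- move=> e eA; rewrite mem_relabel; apply: m.
  by rewrite -(sub_act s) -val_act actK'.
- move=> e; rewrite mem_relabel => /w; rewrite -(sub_act s) -val_act actK' => H /H.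
  by rewrite -(cardI_act s) -val_act actK'.
Qed.

Lemma relabelK (s : {perm 'I_v}) (x : hgraph k v) : relabel s^-1%g (relabel s x) = x.
Proof. by apply/setP => e; rewrite mem_relabel invgK mem_relabel actK. Qed.

Lemma fP_sym : hyper_property fP.
Proof.
move=> s x; apply/idP/idP => /existsP[A gA]; apply/existsP.
- by rewrite -(relabelK s x); exists (s^-1%g @: A); apply: good_relabel.
- by exists (s @: A); apply: good_relabel.
Qed.

Hypothesis hk : 2 <= k.

Lemma hh_gt0 : 0 < hh.
Proof. rewrite /hh; have := odd_double_half k; case: (odd k) => /=; lia. Qed.

Lemma hh_le : hh <= k.-1.
Proof. rewrite /hh; have := odd_double_half k; case: (odd k) => /=; lia. Qed.

Lemma in_flip1 (x : hgraph k v) g e :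
  (e \in flip x [set g]) = (if e == g then g \notin x else e \in x).
Proof. by rewrite /flip inE in_set1; case: eqP => [->|]; rewrite ?addbT ?addbF. Qed.

Lemma flipK (x : hgraph k v) g : flip (flip x [set g]) [set g] = x.
Proof.
apply/setP => e; rewrite !in_flip1; case: (e =P g) => [->|//].
by rewrite eqxx negbK.
Qed.

Lemma good_flip (x : hgraph k v) A g :
  good x A -> #|val g :&: A| < hh -> good (flip x [set g]) A.
Proof.
move=> /goodP[c m w] gA.
have ngA : ~~ (val g \subset A).
  apply/negP => /setIidPl; move: gA => /[swap] ->; rewrite (eqP (valP g)).
  by have := hh_le; lia.
apply/goodP; split=> // e.
- move=> eA; rewrite in_flip1; case: eqP => [eg|_]; last exact: m.
  by move: ngA; rewrite -eg eA.
- rewrite in_flip1; case: eqP => [->|_ ex]; first by [].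
  exact: w.
Qed.

Definition miss (x : hgraph k v) (A : {set 'I_v}) := [set e : edge k v | (val e \subset A) && (e \notin x)].
Definition viol (x : hgraph k v) (A : {set 'I_v}) :=
  [set e in x | ~~ (val e \subset A) && (hh <= #|val e :&: A|)].

Lemma mkE_proof (A : {set 'I_v}) y : #|A| = k.+1 -> y \in A -> #|A :\ y| == k.
Proof. by move=> cA yA; apply/eqP; move: (cardsD1 y A); rewrite yA cA /=; lia. Qed.

Lemma two_pts (A A' : {set 'I_v}) : #|A| = k.+1 -> #|A'| = k.+1 -> A != A' ->
  hh <= #|A :&: A'| ->
  exists y1 y2, [/\ y1 \in A, y2 \in A, y1 != y2 &
    forall y, (y == y1) || (y == y2) ->
      ~~ (A :\ y \subset A') && (hh <= #|(A :\ y) :&: A'|)].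
Proof.
move=> cA cA' nAA' hI.
have d0 : 0 < #|A :\: A'|.
  rewrite card_gt0 setD_eq0; apply/negP => sAA'.
  have := subset_leqif_cards sAA'; rewrite cA cA' => -[_].
  by rewrite eqxx (negbTE nAA').
case: (ltngtP #|A :\: A'| 1) => [|d1|d1]; first by lia.
- have /card_gt1P [y1 [y2 [y1in y2in y12]]] := d1.
  move: y1in y2in; rewrite !inE => /andP[y1A' y1A] /andP[y2A' y2A].
  exists y1, y2; split=> // y /orP[] /eqP ->.
  + apply/andP; split.
      apply/negP => /subsetP /(_ y2); rewrite !inE eq_sym y12 y2A => /(_ isT).
      by rewrite (negbTE y2A').
    suff -> : (A :\ y1) :&: A' = A :&: A' by [].
    apply/setP => i; rewrite !inE; case: (i =P y1) => [->|_] //=.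
    by rewrite (negbTE y1A') andbF.
  + apply/andP; split.
      apply/negP => /subsetP /(_ y1); rewrite !inE y12 y1A => /(_ isT).
      by rewrite (negbTE y1A').
    suff -> : (A :\ y2) :&: A' = A :&: A' by [].
    apply/setP => i; rewrite !inE; case: (i =P y2) => [->|_] //=.
    by rewrite (negbTE y2A') andbF.
- have /cards1P [a Ea] : #|A :\: A'| == 1 by rewrite d1.
  move: (cardsD A A'); rewrite d1 cA => cI.
  have cI' : #|A :&: A'| = k by lia.
  have : 1 < #|A :&: A'| by rewrite cI'.
  case/card_gt1P => y1 [y2 [y1in y2in y12]].
  have aA : a \in A :\: A' by rewrite Ea set11.
  move: aA; rewrite inE => /andP[aA' aA].
  have key y : y \in A :&: A' ->
      ~~ (A :\ y \subset A') && (hh <= #|(A :\ y) :&: A'|).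
    move=> yI; apply/andP; split.
      apply/negP => /subsetP /(_ a); rewrite !inE aA andbT (negbTE aA') => H.
      suff ay : a != y by have := H ay.
      apply/eqP => ay; move: yI; rewrite -ay inE (negbTE aA').
      by rewrite andbF.
    have -> : (A :\ y) :&: A' = (A :&: A') :\ y.
      by apply/setP => i; rewrite !inE; case: (i == y).
    move: (cardsD1 y (A :&: A')); rewrite yI cI' /=.
    by have := hh_le; lia.
  exists y1, y2; move: y1in y2in; rewrite !inE => /andP[y1A y1A'] /andP[y2A y2A'].
  split=> // y /orP[] /eqP ->; apply: key; rewrite inE; apply/andP; split => //.
Qed.

Definition pickT (A : {set 'I_v}) : {set 'I_v} :=
  odflt set0 [pick T : {set 'I_v} | (T \subset A) && (#|T| == hh)].

Lemma pickT_spec (A : {set 'I_v}) : hh <= #|A| -> (pickT A \subset A) && (#|pickT A| == hh).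
Proof.
move=> hA; rewrite /pickT; case: pickP => [T -> //|none].
by have [B HB] := exists_subset_card hA; move: (none B); rewrite HB.
Qed.

Lemma fam_bound (F : {set {set 'I_v}}) :
  (forall A, A \in F -> hh <= #|A|) ->
  (forall A B, A \in F -> B \in F -> A != B -> #|A :&: B| < hh) ->
  #|F| <= 'C(v, hh).
Proof.
move=> cF dF.
rewrite -(@card_in_imset _ _ pickT F).
  rewrite -[v in 'C(v, _)]card_ord -card_draws; apply: subset_leq_card.
  apply/subsetP => T /imsetP[A AF ->]; rewrite inE.
  by case/andP: (pickT_spec (cF A AF)).
move=> A B AF BF E; apply/eqP; apply/negPn/negP => nAB.
have := dF A B AF BF nAB.
case/andP: (pickT_spec (cF A AF)) => sA /eqP cA.
case/andP: (pickT_spec (cF B BF)) => sB /eqP cB.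
have : pickT A \subset A :&: B by rewrite subsetI sA E sB.
move/subset_leq_card; rewrite cA; lia.
Qed.

Definition Fam1 (x : hgraph k v) := [set A : {set 'I_v} |
  [&& #|A| == k.+1, viol x A == set0 & #|miss x A| <= 1]].
Definition Fam2 (x : hgraph k v) := [set A : {set 'I_v} |
  [&& #|A| == k.+1, miss x A == set0 & #|viol x A| <= 1]].

Lemma two_in (S : {set edge k v}) e1 e2 : e1 \in S -> e2 \in S -> e1 != e2 -> 1 < #|S|.
Proof. by move=> h1 h2 h12; apply/card_gt1P; exists e1, e2. Qed.

Lemma fam_sep (x : hgraph k v) (A B : {set 'I_v}) :
  ((A \in Fam1 x) && (B \in Fam1 x)) || ((A \in Fam2 x) && (B \in Fam2 x)) ->
  A != B -> #|A :&: B| < hh.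
Proof.
move=> HF nAB; rewrite ltnNge; apply/negP => hI.
have cA : #|A| = k.+1 by case/orP: HF; rewrite !inE => /andP[/and3P[/eqP]].
have cB : #|B| = k.+1 by case/orP: HF; rewrite !inE => /andP[_ /and3P[/eqP]].
have [y1 [y2 [y1A y2A y12 Py]]] := two_pts cA cB nAB hI.
pose e1 : edge k v := Sub (A :\ y1) (mkE_proof cA y1A).
pose e2 : edge k v := Sub (A :\ y2) (mkE_proof cA y2A).
have ve1 : val e1 = A :\ y1 by rewrite SubK.
have ve2 : val e2 = A :\ y2 by rewrite SubK.
have ne : e1 != e2.
  apply/negP => /eqP /(congr1 val); rewrite ve1 ve2 => E.
  have : y2 \in A :\ y1 by rewrite !inE eq_sym y12.
  by rewrite E !inE eqxx.
have P1 : ~~ (A :\ y1 \subset B) && (hh <= #|(A :\ y1) :&: B|).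
  by apply: Py; rewrite eqxx.
have P2 : ~~ (A :\ y2 \subset B) && (hh <= #|(A :\ y2) :&: B|).
  by apply: Py; rewrite eqxx orbT.
case/orP: HF => /andP[]; rewrite !inE.
- move=> /and3P[_ _ mA] /and3P[_ /eqP vB _].
  have inm (e : edge k v) y : val e = A :\ y ->
      ~~ (A :\ y \subset B) && (hh <= #|(A :\ y) :&: B|) -> e \in miss x A.
    move=> ve Pe; rewrite inE ve subD1set /=; apply/negP => ex.
    have : e \in viol x B by rewrite inE ex ve.
    by rewrite vB inE.
  by move: (two_in (inm _ _ ve1 P1) (inm _ _ ve2 P2) ne); rewrite ltnNge mA.
- move=> /and3P[_ /eqP mA _] /and3P[_ _ vB].
  have inv (e : edge k v) y : val e = A :\ y ->
      ~~ (A :\ y \subset B) && (hh <= #|(A :\ y) :&: B|) -> e \in viol x B.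
    move=> ve Pe; rewrite inE ve Pe andbT.
    apply/negPn/negP => ex.
    have : e \in miss x A by rewrite inE ve subD1set ex.
    by rewrite mA inE.
  by move: (two_in (inv _ _ ve1 P1) (inv _ _ ve2 P2) ne); rewrite ltnNge vB.
Qed.

Lemma fam1_bound x : #|Fam1 x| <= 'C(v, hh).
Proof.
apply: fam_bound => [A|A B AF BF]; last by apply: (@fam_sep x); rewrite AF BF.
by rewrite inE => /and3P[/eqP -> _ _]; have := hh_le; lia.
Qed.

Lemma fam2_bound x : #|Fam2 x| <= 'C(v, hh).
Proof.
apply: fam_bound => [A|A B AF BF]; last by apply: (@fam_sep x); rewrite AF BF orbT.
by rewrite inE => /and3P[/eqP -> _ _]; have := hh_le; lia.
Qed.

Lemma sens_pos_case (x : hgraph k v) A : good x A ->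
  sens_at fP x <= 'C(k.+1, hh) * 'C(v, k - hh).
Proof.
move=> gA; have cA : #|A| = k.+1 by case/goodP: gA.
pose D := [set T : {set 'I_v} | (T \subset A) && (#|T| == hh)].
apply: (@leq_trans #|\bigcup_(T in D) [set g : edge k v | T \subset val g]|).
  apply: subset_leq_card; apply/subsetP => g; rewrite inE => Hg.
  have hI : hh <= #|val g :&: A|.
    rewrite leqNgt; apply/negP => lt.
    have /existsP[] : fP (flip x [set g]) by apply/existsP; exists A; exact: good_flip.
    move=> B gB; move: Hg; suff -> : fP x by rewrite (_ : fP _ = true) //; apply/existsP; exists B.
    by apply/existsP; exists A.
  have [T /andP[sT /eqP cT]] := exists_subset_card hI.
  apply/bigcupP; exists T.
    by rewrite inE cT eqxx andbT; apply: subset_trans sT (subsetIr _ _).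
  by rewrite inE; apply: subset_trans sT (subsetIl _ _).
apply: leq_trans (card_bigcup_le _ _) _.
apply: (@leq_trans (\sum_(T in D) 'C(v, k - hh))); last first.
  by rewrite sum_nat_const cards_draws cA.
apply: leq_sum => T; rewrite inE => /andP[_ /eqP cT].
rewrite -(card_imset _ val_inj).
apply: leq_trans (_ : _ <= #|[set B : {set 'I_v} | (T \subset B) && (#|B| == #|T| + (k - hh))]|) _.
  apply: subset_leq_card; apply/subsetP => B /imsetP[g Tg ->].
  rewrite inE in Tg; rewrite inE Tg (eqP (valP g)) cT /=; apply/eqP; have := hh_le; lia.
by have := card_supsets T (k - hh); rewrite card_ord.
Qed.

Lemma sens_neg_case (x : hgraph k v) : ~~ fP x ->
  sens_at fP x <= 'C(v, hh) + 'C(v, hh).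
Proof.
move=> nfx.
apply: (@leq_trans #|(\bigcup_(A in Fam1 x) miss x A) :|: (\bigcup_(A in Fam2 x) viol x A)|).
  apply: subset_leq_card; apply/subsetP => g; rewrite inE => Hg.
  have fg : fP (flip x [set g]) by move: Hg; rewrite (negbTE nfx); case: (fP _).
  case/existsP: fg => A gA.
  have hI : hh <= #|val g :&: A|.
    rewrite leqNgt; apply/negP => lt.
    have := good_flip gA lt; rewrite flipK => gx.
    by move: nfx; rewrite negb_exists => /forallP /(_ A); rewrite gx.
  case/goodP: gA => cA m w.
  case gx : (g \in x).
  - have gf : g \notin flip x [set g] by rewrite in_flip1 eqxx gx.
    have ngA : ~~ (val g \subset A).
      by apply/negP => /m; rewrite (negbTE gf).
    apply/setUP; right; apply/bigcupP; exists A.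
      rewrite inE cA eqxx /=; apply/andP; split.
        apply/eqP/setP => e; rewrite !inE; apply/negbTE/negP => /andP[eA enx].
        have := m e eA; rewrite in_flip1.
        case: eqP => [_|_]; first by rewrite gx.
        by rewrite (negbTE enx).
      rewrite -(cards1 g); apply: subset_leq_card; apply/subsetP => e.
      rewrite !inE => /andP[ex /andP[neA heA]]; apply/negPn/negP => neg.
      have := w e; rewrite in_flip1 (negbTE neg) ex => /(_ isT neA).
      by rewrite ltnNge heA.
    by rewrite inE gx ngA hI.
  - have gf : g \in flip x [set g] by rewrite in_flip1 eqxx gx.
    have gA : val g \subset A.
      apply/negPn/negP => ngA; have := w g gf ngA; by rewrite ltnNge hI.
    apply/setUP; left; apply/bigcupP; exists A.
      rewrite inE cA eqxx /=; apply/andP; split.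
        apply/eqP/setP => e; rewrite !inE; apply/negbTE; apply/negP.
        case/andP => ex /andP[neA heA].
        have neg : e != g by apply/negP => /eqP eg; move: ex; rewrite eg gx.
        have := w e; rewrite in_flip1 (negbTE neg) ex => /(_ isT neA).
        by rewrite ltnNge heA.
      rewrite -(cards1 g); apply: subset_leq_card; apply/subsetP => e.
      rewrite !inE => /andP[eA ex]; apply/negPn/negP => neg.
      by have := m e eA; rewrite in_flip1 (negbTE neg) (negbTE ex).
    by rewrite inE gA gx.
apply: leq_trans (leq_card_setU _ _) _.
apply: leq_add.
  apply: leq_trans (card_bigcup_le _ _) _.
  apply: leq_trans (fam1_bound x); rewrite -sum1_card; apply: leq_sum => A.
  by rewrite inE => /and3P[_ _].
apply: leq_trans (card_bigcup_le _ _) _.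
apply: leq_trans (fam2_bound x); rewrite -sum1_card; apply: leq_sum => A.
by rewrite inE => /and3P[_ _].
Qed.

Lemma uphalfE : uphalf k = k - hh.
Proof. rewrite uphalf_half /hh; have := odd_double_half k; case: (odd k) => /=; lia. Qed.

Lemma sens_upper : 0 < v -> sens fP <= ('C(k.+1, hh) + 2) * v ^ (uphalf k).
Proof.
move=> v0; apply/bigmax_leqP => x _.
have e1 : 'C(v, k - hh) <= v ^ uphalf k by rewrite uphalfE bin_le_exp.
have e2 : 'C(v, hh) <= v ^ uphalf k.
  apply: leq_trans (bin_le_exp _ _) _; apply: leq_pexp2l => //.
  rewrite uphalfE; have := odd_double_half k; rewrite /hh; case: (odd k) => /=; lia.
case fx : (fP x).
- case/existsP: fx => A gA; apply: leq_trans (sens_pos_case gA) _.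
  rewrite mulnDl; apply: leq_trans (leq_addr _ _); exact: leq_mul.
- apply: leq_trans (sens_neg_case (negbT fx)) _.
  rewrite mulnDl; apply: leq_trans (leq_addl _ _); lia.
Qed.

Definition clq (A : {set 'I_v}) : hgraph k v := [set e : edge k v | val e \subset A].

Lemma clq_good (A : {set 'I_v}) : #|A| = k.+1 -> good (clq A) A.
Proof.
move=> cA; apply/goodP; split => // e; first by rewrite inE.
by rewrite inE => ->.
Qed.

Lemma flip_bad (A0 : {set 'I_v}) (g : edge k v) : #|A0| = k.+1 -> ~~ (val g \subset A0) ->
  hh <= #|val g :&: A0| -> ~~ fP (flip (clq A0) [set g]).
Proof.
move=> cA0 ngA hI; apply/existsP => -[A /goodP[cA m w]].
have gf : g \in flip (clq A0) [set g] by rewrite in_flip1 eqxx inE.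
case: (A =P A0) => [EA|/eqP nA].
  by move: (w g gf); rewrite EA ngA => /(_ isT); rewrite ltnNge hI.
have : 0 < #|A :\: A0|.
  rewrite card_gt0 setD_eq0; apply/negP => sAA0.
  have := subset_leqif_cards sAA0; rewrite cA cA0 => -[_].
  by rewrite eqxx (negbTE nA).
case/card_gt0P => a; rewrite inE => /andP[aA0 aA].
have : 1 < #|A :\ a| by move: (cardsD1 a A); rewrite aA cA /=; lia.
case/card_gt1P => y1 [y2 [y1in y2in y12]].
move: y1in y2in; rewrite !inE => /andP[ay1 y1A] /andP[ay2 y2A].
pose e1 : edge k v := Sub (A :\ y1) (mkE_proof cA y1A).
pose e2 : edge k v := Sub (A :\ y2) (mkE_proof cA y2A).
have eqg (e : edge k v) y : val e = A :\ y -> a != y -> e = g.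
  move=> ve ay; have := m e; rewrite ve subD1set => /(_ isT).
  rewrite in_flip1; case: eqP => // _; rewrite inE ve => /subsetP /(_ a).
  by rewrite !inE ay aA (negbTE aA0) => /(_ isT).
have ay1' : a != y1 by rewrite eq_sym.
have ay2' : a != y2 by rewrite eq_sym.
have E12 : e1 = e2.
  by rewrite (eqg e1 y1 (SubK _ _) ay1') (eqg e2 y2 (SubK _ _) ay2').
have : y2 \in val e1 by rewrite SubK !inE eq_sym y12.
by rewrite E12 SubK !inE eqxx.
Qed.

Lemma fP_clq (A : {set 'I_v}) : #|A| = k.+1 -> fP (clq A).
Proof. by move=> cA; apply/existsP; exists A; apply: clq_good. Qed.

Lemma sens_lower : k.+1 <= v -> 'C(v - k.+1, k - hh) <= sens fP.
Proof.
move=> kv.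
have [A0 /andP[_ /eqP cA0]] : exists A0 : {set 'I_v}, (A0 \subset setT) && (#|A0| == k.+1).
  by apply: exists_subset_card; rewrite cardsT card_ord.
have [T0 /andP[sT0 /eqP cT0]] : exists T0 : {set 'I_v}, (T0 \subset A0) && (#|T0| == hh).
  by apply: exists_subset_card; rewrite cA0; have := hh_le; lia.
have : 0 < #|A0| by rewrite cA0.
case/card_gt0P => a aA0.
pose d : edge k v := Sub (A0 :\ a) (mkE_proof cA0 aA0).
pose Dom := [set U : {set 'I_v} | (U \subset ~: A0) && (#|U| == k - hh)].
have cC : #|~: A0| = v - k.+1 by have := cardsC A0; rewrite cA0 card_ord; lia.
pose phi (U : {set 'I_v}) : edge k v := insubd d (T0 :|: U).
have vphi U : U \in Dom -> val (phi U) = T0 :|: U.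
  rewrite inE => /andP[sU /eqP cU]; rewrite /phi val_insubd.
  have dis : T0 :&: U = set0.
    apply/setP => i; rewrite !inE; apply/negbTE/andP => -[iT iU].
    by move: (subsetP sU i iU) (subsetP sT0 i iT); rewrite inE => /negP.
  rewrite cardsU dis cards0 cT0 cU subn0.
  have -> : hh + (k - hh) = k by have := hh_le; lia.
  by rewrite eqxx.
apply: leq_trans (leq_bigmax (clq A0)).
rewrite /sens_at -cC -cards_draws.
rewrite -(@card_in_imset _ _ phi Dom); last first.
  move=> U1 U2 D1 D2 E.
  have := congr1 val E; rewrite (vphi _ D1) (vphi _ D2) => E'.
  move: D1 D2; rewrite !inE => /andP[s1 _] /andP[s2 _].
  apply/setP => i; have := congr1 (fun X : {set 'I_v} => i \in X) E'; rewrite /= !inE.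
  case iT: (i \in T0) => /=; last by [].
  have iA : i \in A0 by apply: (subsetP sT0).
  case iU1: (i \in U1); first by move: (subsetP s1 i iU1); rewrite inE iA.
  case iU2: (i \in U2); first by move: (subsetP s2 i iU2); rewrite inE iA.
  by [].
apply: subset_leq_card; apply/subsetP => g /imsetP[U DU ->].
rewrite inE fP_clq // eqb_id flip_bad //.
  have := DU; rewrite inE => /andP[sU /eqP cU].
  have : 0 < #|U| by rewrite cU; have := hh_le; lia.
  case/card_gt0P => u uU; apply/negP => /subsetP /(_ u).
  rewrite (vphi _ DU) inE uU orbT => /(_ isT) uA.
  by move: (subsetP sU u uU); rewrite inE uA.
rewrite (vphi _ DU) -cT0; apply: subset_leq_card.
by rewrite subsetI subsetUl sT0.
Qed.

Definition valid (F : {set {set 'I_v}}) : bool :=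
  [forall A in F, #|A| == k.+1] &&
  [forall A in F, forall B in F, (A != B) ==> (#|A :&: B| < k)].

Lemma valid0 : valid set0.
Proof. by apply/andP; split; apply/forall_inP => A; rewrite inE. Qed.

Definition F0 := [arg max_(F > (set0 : {set {set 'I_v}}) | valid F) #|F|].

Lemma F0_spec : valid F0 /\ forall F : {set {set 'I_v}}, valid F -> #|F| <= #|F0|.
Proof. by rewrite /F0; case: (arg_maxnP (fun F : {set {set 'I_v}} => #|F|) valid0) => F vF mx. Qed.

Lemma validP (F : {set {set 'I_v}}) : valid F ->
  (forall A, A \in F -> #|A| = k.+1) /\
  (forall A B, A \in F -> B \in F -> A != B -> #|A :&: B| < k).
Proof.
case/andP => /forall_inP c /forall_inP d; split.
  by move=> A /c /eqP.
by move=> A B AF BF nAB; move: (d A AF) => /forall_inP /(_ B BF) /implyP; apply.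
Qed.

Lemma cover_all (B : {set 'I_v}) : #|B| = k.+1 -> exists2 A, A \in F0 & k <= #|A :&: B|.
Proof.
move=> cB; case: F0_spec => vF mx.
case: (boolP [exists A in F0, k <= #|A :&: B|]) => [/exists_inP[A AF hA]|nE].
  by exists A.
have nB : B \notin F0.
  apply/negP => BF; move: nE; rewrite negb_exists_in => /forall_inP /(_ B BF).
  by rewrite setIid cB leqnSn.
have lt : forall A, A \in F0 -> #|A :&: B| < k.
  move=> A AF; move: nE; rewrite negb_exists_in => /forall_inP /(_ A AF).
  by rewrite ltnNge.
have [c d] := validP vF.
have vF1 : valid (B |: F0).
  apply/andP; split; apply/forall_inP => A; rewrite !inE.
    by case/orP => [/eqP ->|/c ->]; rewrite ?cB.
  move=> HA; apply/forall_inP => A'; rewrite !inE => HA'; apply/implyP.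
  case/orP: HA => [/eqP ->|AF]; case/orP: HA' => [/eqP ->|A'F].
  - by rewrite eqxx.
  - by move=> _; rewrite setIC; apply: lt.
  - by move=> _; apply: lt.
  - by apply: d.
have := mx _ vF1; rewrite cardsU1 nB; lia.
Qed.

Lemma F0_count : 'C(v, k.+1) <= #|F0| * (k.+1 * v).
Proof.
case: F0_spec => vF _; have [c d] := validP vF.
pose DA (A : {set 'I_v}) := [set T : {set 'I_v} | (T \subset A) && (#|T| == k)].
rewrite -[v in 'C(v, _)]card_ord -card_draws.
apply: (@leq_trans #|\bigcup_(A in F0) \bigcup_(T in DA A)
          [set B : {set 'I_v} | (T \subset B) && (#|B| == #|T| + 1)]|).
  apply: subset_leq_card; apply/subsetP => B; rewrite inE => /eqP cB.
  have [A AF hA] := cover_all cB.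
  have [T /andP[sT /eqP cT]] := exists_subset_card hA.
  apply/bigcupP; exists A => //; apply/bigcupP; exists T.
    by rewrite inE cT eqxx andbT; apply: subset_trans sT (subsetIl _ _).
  by rewrite inE cT cB addn1 eqxx andbT; apply: subset_trans sT (subsetIr _ _).
apply: leq_trans (card_bigcup_le _ _) _.
rewrite -sum_nat_const; apply: leq_sum => A AF.
apply: leq_trans (card_bigcup_le _ _) _.
apply: (@leq_trans (\sum_(T in DA A) v)).
  apply: leq_sum => T _; have := card_supsets T 1; rewrite card_ord bin1; exact.
by rewrite sum_nat_const cards_draws c // binSn.
Qed.

Lemma flip0 (S : {set edge k v}) : flip set0 S = S.
Proof. by apply/setP => e; rewrite /flip !inE. Qed.

Lemma fP0 : ~~ fP set0.
Proof.
apply/existsP => -[A /goodP[cA m _]].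
have : 0 < #|A| by rewrite cA.
case/card_gt0P => y yA.
have := m (Sub (A :\ y) (mkE_proof cA yA)); rewrite SubK subD1set inE.
by move=> /(_ isT).
Qed.

Lemma bsens_lower : #|F0| <= bsens fP.
Proof.
case: F0_spec => vF _; have [c d] := validP vF.
pose P := [set clq A | A in F0].
have sep A1 A2 e : A1 \in F0 -> A2 \in F0 -> e \in clq A1 -> e \in clq A2 -> A1 = A2.
  move=> A1F A2F; rewrite !inE => s1 s2; apply/eqP/negPn/negP => nA.
  have := d _ _ A1F A2F nA; rewrite ltnNge.
  have : val e \subset A1 :&: A2 by rewrite subsetI s1 s2.
  by move/subset_leq_card; rewrite (eqP (valP e)) => ->.
have ne A : A \in F0 -> exists e, e \in clq A.
  move=> AF; have cA := c A AF; have : 0 < #|A| by rewrite cA.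
  case/card_gt0P => y yA; exists (Sub (A :\ y) (mkE_proof cA yA)).
  by rewrite inE SubK subD1set.
have cP : #|P| = #|F0|.
  apply: card_in_imset => A1 A2 A1F A2F E.
  have [e eA1] := ne _ A1F; apply: (sep _ _ e A1F A2F eA1); by rewrite -E.
apply: leq_trans (leq_bigmax (set0 : hgraph k v)).
rewrite -cP /bsens_at; apply: (@leq_bigmax_cond _ (sens_blocks fP set0) (fun P => #|P|) P).
apply/andP; split.
  apply/trivIsetP => S1 S2 /imsetP[A1 A1F ->] /imsetP[A2 A2F ->] nS.
  rewrite -setI_eq0; apply/eqP/setP => e; rewrite inE in_set0.
  apply/negP => /andP[e1 e2]; move: nS; by rewrite (sep _ _ e A1F A2F e1 e2) eqxx.
apply/forall_inP => S /imsetP[A AF ->].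
by rewrite flip0 fP_clq ?c // (negbTE fP0).
Qed.

Lemma card_edge : #|{: edge k v}| = 'C(v, k).
Proof.
rewrite /edge card_sig -[v in 'C(v, _)]card_ord -card_draws.
by apply: eq_card => A; rewrite !inE.
Qed.

Lemma bsens_upper : bsens fP <= 'C(v, k).
Proof.
apply/bigmax_leqP => x _; apply/bigmax_leqP => P /andP[tP /forall_inP fl].
have ne S : S \in P -> 0 < #|S|.
  move=> SP; rewrite card_gt0; apply/negP => /eqP S0.
  by move: (fl S SP); rewrite S0 /flip; rewrite (_ : [set e | _] = x) ?eqxx //;
     apply/setP => e; rewrite !inE addbF.
rewrite -card_edge; apply: leq_trans (max_card (cover P)).
rewrite -(eqP tP) -sum1_card; apply: leq_sum => S SP; exact: ne.
Qed.
End Prop1.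

Lemma expn_monol m n e : m <= n -> m ^ e <= n ^ e.
Proof. by move=> mn; elim: e => // e IH; rewrite !expnS leq_mul. Qed.

Lemma ffact_ge n j : (n - j) ^ j <= n ^_ j.
Proof.
elim: j => [|j IH]; first by rewrite expn0 ffactn0.
rewrite ffactnSr expnSr; apply: leq_mul; last by lia.
by apply: leq_trans IH; apply: expn_monol; lia.
Qed.

Lemma theta_sq_of (s b : nat -> nat) m :
  theta_pow s m -> theta_pow b (m * 2) -> theta_sq b s.
Proof.
move=> [c1 [C1 [N1 [c10 H1]]]] [c2 [C2 [N2 [c20 H2]]]].
exists (C1 ^ 2 * c2 + 1), (C2 * c1 ^ 2), (maxn N1 N2); split; first by rewrite addn1.
move=> v; rewrite geq_max => /andP[h1 h2].
have [l1 u1] := H1 v h1; have [l2 u2] := H2 v h2.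
split.
- apply: (@leq_trans ((C1 * v ^ m) ^ 2)); first exact: expn_monol.
  rewrite expnMn -expnM.
  apply: (@leq_trans (C1 ^ 2 * (c2 * b v))); first by rewrite leq_mul2l l2 orbT.
  by rewrite mulnA leq_mul2r leq_addr orbT.
- apply: leq_trans u2 _; rewrite -mulnA leq_mul2l; apply/orP; right.
  rewrite expnM -expnMn; exact: expn_monol.
Qed.

Theorem corollary4p5 (k : nat) (hk : 2 <= k) :
  exists f : forall v : nat, hgraph k v -> bool,
    (forall v, hyper_property (f v)) /\
    theta_pow (fun v => sens (f v)) (uphalf k) /\
    theta_pow (fun v => bsens (f v)) k /\
    (~~ odd k -> theta_sq (fun v => bsens (f v)) (fun v => sens (f v))).
Proof.
have ur : uphalf k = k - hh k.
  rewrite uphalf_half /hh; have := odd_double_half k; case: (odd k) => /=; lia.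
have hle : hh k <= k.-1.
  rewrite /hh; have := odd_double_half k; case: (odd k) => /=; lia.
have TS : theta_pow (fun v => sens (@fP k v)) (uphalf k).
  exists (2 ^ uphalf k * (uphalf k)`!), ('C(k.+1, hh k) + 2), (4 * k + 4).
  split; first by rewrite muln_gt0 expn_gt0 fact_gt0.
  move=> v hv; split; last by apply: sens_upper => //; lia.
  have L := sens_lower hk (_ : k.+1 <= v); rewrite -ur in L.
  have L' := L ltac:(lia).
  apply: leq_trans _ (_ : 2 ^ uphalf k * (uphalf k)`! * 'C(v - k.+1, uphalf k) <= _);
    last by rewrite leq_mul2l L' orbT.
  rewrite -mulnA [_`! * _]mulnC bin_ffact.
  apply: leq_trans (_ : 2 ^ uphalf k * (v - k.+1 - uphalf k) ^ uphalf k <= _);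
    last by rewrite leq_mul2l ffact_ge orbT.
  rewrite -expnMn; apply: expn_monol; lia.
have TB : theta_pow (fun v => bsens (@fP k v)) k.
  exists (2 ^ k.+1 * k.+1`! * k.+1), 1, (2 * k + 2).
  split; first by rewrite !muln_gt0 expn_gt0 fact_gt0.
  move=> v hv; split; last by rewrite mul1n; apply: leq_trans (bsens_upper _ _) (bin_le_exp _ _).
  have v0 : 0 < v by lia.
  rewrite -(leq_pmul2l v0).
  have E1 := @F0_count k v hk; have E2 := @bsens_lower k v hk.
  apply: (@leq_trans (2 ^ k.+1 * k.+1`! * 'C(v, k.+1))).
    rewrite -expnS -mulnA (mulnC (k.+1)`!) bin_ffact.
    apply: leq_trans (_ : 2 ^ k.+1 * (v - k.+1) ^ k.+1 <= _);
      last by rewrite leq_mul2l ffact_ge orbT.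
    rewrite -expnMn; apply: expn_monol; lia.
  apply: (@leq_trans (2 ^ k.+1 * k.+1`! * (#|F0 k v| * (k.+1 * v)))).
    by rewrite leq_mul2l E1 orbT.
  set a := 2 ^ k.+1; set b := k.+1`!; set F := #|F0 k v|.
  have -> : a * b * (F * (k.+1 * v)) = v * (a * b * k.+1 * F) by lia.
  rewrite leq_mul2l; apply/orP; right; rewrite leq_mul2l E2 orbT //.
exists (fun v => @fP k v); split; first by move=> v; apply: fP_sym.
split => //; split => // ek.
apply: (theta_sq_of TS); rewrite (_ : uphalf k * 2 = k) //.
move: ek; rewrite ur /hh; have := odd_double_half k; case: (odd k) => //= E _; lia.
Qed.
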